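(* (Model Existence.) Every evident branch is satisfiable. Moreover, every complete evident branch has a surjective model, and every finite evident branch has a model $\mathcal{I}$ such that $\mathcal{I}\sigma$ is a finite set for every type $\sigma$.
   Context: Types: a countable set of base types including a distinguished $o$; other base types are sorts ($\alpha$). Types: base types, and $\sigma\tau$ for types $\sigma,\tau$ (functions from $\sigma$ to $\tau$; $\sigma\tau\mu=\sigma(\tau\mu)$). Countably many names, each with a unique type, infinitely many of each type. Terms: names; $st:\mu$ for $s:\tau\mu$, $t:\tau$; $\lambda x.t:\sigma\tau$ for a name $x:\sigma$ and $t:\tau$. Logical constants: $\neg:oo$, $=_\sigma:\sigma\sigma o$ for each $\sigma$; all other names are variables. Formulas: terms of type $o$; $s=_\sigma t$ is $(=_\sigma s)t$; $s\neq_\sigma t$ is $\neg(s=_\sigma t)$. Semantics: a frame $\mathcal{D}$ maps types to nonempty sets with $\mathcal{D}(\sigma\tau)\subseteq(\mathcal{D}\sigma\to\mathcal{D}\tau)$. An assignment $\mathcal{I}$ into $\mathcal{D}$ extends $\mathcal{D}$ and maps each name $x:\sigma$ into $\mathcal{D}\sigma$; $\mathcal{I}^x_a$ is the update. Partial evaluation: $\hat{\mathcal{I}}x=\mathcal{I}x$; $\hat{\mathcal{I}}(st)=(\hat{\mathcal{I}}s)(\hat{\mathcal{I}}t)$ when defined; $\hat{\mathcal{I}}(\lambda x.s)=f$ if $\lambda x.s:\sigma\tau$, $f\in\mathcal{D}(\sigma\tau)$ and $\widehat{\mathcal{I}^x_a}s=fa$ for all $a\in\mathcal{D}\sigma$.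 An interpretation is an assignment with total evaluation; it is surjective if for every type $\sigma$ and $a\in\mathcal{I}\sigma$ there is $s:\sigma$ with $\hat{\mathcal{I}}s=a$. Logical: $\mathcal{I}o=\{0,1\}$, $\mathcal{I}(\neg)$ negation, $\mathcal{I}(=_\sigma)$ identity. A model of a set of formulas is a logical interpretation evaluating each to $1$; satisfiable = has a model. Normalization: fixed type-preserving total $[\cdot]$; $s$ normal iff $[s]=s$; (N1) $[[s]]=[s]$; (N2) $[[s]t]=[st]$; (N3) $[xs_1\dots s_n]=x[s_1]\dots[s_n]$ for a name $x$, $n\ge0$, $xs_1\dots s_n$ of base type; (N4) $\hat{\mathcal{I}}[s]=\hat{\mathcal{I}}s$ for every interpretation. Substitutions: type-preserving partial functions $\theta$ from names to terms, $\theta^x_s$ the update; each extends to a type-preserving total $\hat\theta$ with (S1) $\hat\theta x=\theta x$ if $x\in\mathrm{Dom}\theta$, else $x$; (S2) $\hat\theta(st)=(\hat\theta s)(\hat\theta t)$; (S3) $[(\hat\theta(\lambda x.s))t]=[\widehat{\theta^x_t}s]$; (S4) $[\hat\emptyset s]=[s]$. A branch is a set of normal formulas. A branch $E$ is evident if ($x$ ranges over variables): (DN) $\neg\neg s\in E$ implies $s\in E$; (BQ) $s=_ot\in E$ implies $s,t\in E$ or $\neg s,\neg t\in E$; (BE) $s\neq_ot\in E$ implies $s,\neg t\in E$ or $\neg s,t\in E$; (FQ) $s=_{\sigma\tau}t\in E$ implies $[su]=[tu]\in E$ for every normal $u:\sigma$; (FE) $s\neq_{\sigma\tau}t\in E$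 implies $[sx]\neq[tx]\in E$ for some variable $x$; (Mat) if $xs_1\dots s_n\in E$ and $\neg xt_1\dots t_n\in E$ then $n\ge1$ and $s_i\neq t_i\in E$ for some $i$; (Dec) if $xs_1\dots s_n\neq_\alpha xt_1\dots t_n\in E$ then $n\ge1$ and $s_i\neq t_i\in E$ for some $i$; (Con) if $s=_\alpha t\in E$ and $u\neq_\alpha v\in E$ then either $s\neq u,t\neq u\in E$ or $s\neq v,t\neq v\in E$. A branch $E$ is complete if for every normal formula $s$, $s\in E$ or $\neg s\in E$. *)

(* Defs.v *)
From Stdlib Require Import List.
From mathcomp Require Import all_boot.
Set Implicit Arguments. Unset Strict Implicit. Unset Printing Implicit Defensive.

Section STT.
Variable B : countType.
Variable o : B.           (* the distinguished base type o; others are sorts *)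

Inductive ty : Type := TBase (b : B) | TArr (s t : ty).
Definition tyo : ty := TBase o.

Lemma ty_eq_dec : forall s t : ty, {s = t} + {s <> t}.
Proof. decide equality. exact: eq_comparable. Defined.

Inductive name : Type := NNeg | NEq (s : ty) | NVar (s : ty) (n : nat).

Definition nty (x : name) : ty :=
  match x with
  | NNeg => TArr tyo tyo
  | NEq s => TArr s (TArr s tyo)
  | NVar s _ => s
  end.

Lemma name_eq_dec : forall x y : name, {x = y} + {x <> y}.
Proof. decide equality; solve [exact: ty_eq_dec | exact: PeanoNat.Nat.eq_dec]. Defined.

Inductive tm : ty -> Type :=
| tName (x : name) : tm (nty x)
| tApp (s t : ty) (f : tm (TArr s t)) (a : tm s) : tm t
| tLam (x : name) (t : ty) (b : tm t) : tm (TArr (nty x) t).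

Inductive spine : ty -> ty -> Type :=
| snil (s : ty) : spine s s
| scons (s t r : ty) (a : tm s) (rest : spine t r) : spine (TArr s t) r.

Fixpoint sapply (s r : ty) (h : tm s) (sp : spine s r) {struct sp} : tm r :=
  match sp in spine s' r' return tm s' -> tm r' with
  | snil _ => fun h => h
  | scons _ _ _ a rest => fun h => sapply (tApp h a) rest
  end h.

Fixpoint smap (f : forall s, tm s -> tm s) (s r : ty) (sp : spine s r) {struct sp}
  : spine s r :=
  match sp in spine s' r' return spine s' r' with
  | snil s => snil s
  | scons _ _ _ a rest => scons (f _ a) (smap f rest)
  end.

(* "s_i P t_i for some i" for two spines of the same shape (forces n >= 1) *)
Inductive SomeDiff (P : forall s, tm s -> tm s -> Prop) :
  forall s r, spine s r -> spine s r -> Prop :=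
| sd_here (s t r : ty) (a b : tm s) (r1 r2 : spine t r) :
    P s a b -> SomeDiff P (scons a r1) (scons b r2)
| sd_later (s t r : ty) (a b : tm s) (r1 r2 : spine t r) :
    SomeDiff P r1 r2 -> SomeDiff P (scons a r1) (scons b r2).

(* Frames: D(st) is (isomorphic to) a set of functions D s -> D t, i.e. it
   comes with an application map that is extensional (injective). *)
Record frame : Type := Frame {
  car : ty -> Type;
  app : forall s t, car (TArr s t) -> car s -> car t;
  app_ext : forall s t (f g : car (TArr s t)),
      (forall a, app f a = app g a) -> f = g;
  car_ne : forall s, inhabited (car s) }.

Definition asg (D : frame) := forall x : name, car D (nty x).

Definition upd (D : frame) (I : asg D) (x : name) (a : car D (nty x)) : asg D :=
  fun y => match name_eq_dec x y with
           | left e => eq_rect x (fun z => car D (nty z)) a y e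
           | right _ => I y
           end.

(* Partial evaluation, as a relation:  ev I s a  <->  \hat I s = a *)
Fixpoint ev (D : frame) (I : asg D) (s : ty) (u : tm s) {struct u} : car D s -> Prop :=
  match u in tm s return car D s -> Prop with
  | tName x => fun a => a = I x
  | tApp _ _ f b => fun a => exists g c, ev I f g /\ ev I b c /\ app g c = a
  | tLam x _ b => fun g => forall c : car D (nty x), ev (@upd D I x c) b (app g c)
  end.

Definition interp (D : frame) (I : asg D) : Prop :=
  forall s (u : tm s), exists a, ev I u a.

Definition surjective_interp (D : frame) (I : asg D) : Prop :=
  forall s (a : car D s), exists u : tm s, ev I u a.

(* Logical interpretation; tv identifies I o with {0,1} (false/true). *)
Definition logical (D : frame) (I : asg D) (tv : car D tyo -> bool) : Prop :=
  [/\ interp I, bijective tv,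
      (forall a, tv (@app D tyo tyo (I NNeg) a) = ~~ tv a) &
      (forall s (a b : car D s),
          tv (@app D s tyo (@app D s (TArr s tyo) (I (NEq s)) a) b) = true
          <-> a = b)].

Definition is_model (E : tm tyo -> Prop) (D : frame) (I : asg D)
  (tv : car D tyo -> bool) : Prop :=
  logical I tv /\ forall u, E u -> forall a, ev I u a -> tv a = true.

Definition finite_type (T : Type) : Prop := exists l : list T, forall a, In a l.

Definition normal (nf : forall s, tm s -> tm s) (s : ty) (u : tm s) : Prop :=
  nf s u = u.

Record normalization (nf : forall s, tm s -> tm s) : Prop := {
  N1 : forall s (u : tm s), nf s (nf s u) = nf s u;
  N2 : forall s t (f : tm (TArr s t)) (a : tm s),
      nf t (tApp (nf _ f) a) = nf t (tApp f a);
  N3 : forall (x : name) (b : B) (sp : spine (nty x) (TBase b)),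
      nf _ (sapply (tName x) sp) = sapply (tName x) (smap nf sp);
  N4 : forall (D : frame) (I : asg D), interp I ->
      forall s (u : tm s) (a : car D s), ev I (nf s u) a <-> ev I u a }.

Definition subst := forall x : name, option (tm (nty x)).
Definition sempty : subst := fun _ => None.
Definition supd (th : subst) (x : name) (t : tm (nty x)) : subst :=
  fun y => match name_eq_dec x y with
           | left e => Some (eq_rect x (fun z => tm (nty z)) t y e)
           | right _ => th y
           end.

Record subst_ext (nf : forall s, tm s -> tm s)
  (sa : subst -> forall s, tm s -> tm s) : Prop := {
  S1 : forall th x, sa th _ (tName x) =
                    match th x with Some t => t | None => tName x end;
  S2 : forall th s t (f : tm (TArr s t)) (a : tm s),
      sa th t (tApp f a) = tApp (sa th _ f) (sa th s a);
  S3 : forall th (x : name) t (b : tm t) (a : tm (nty x)),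
      nf t (tApp (sa th _ (tLam x b)) a) = nf t (sa (@supd th x a) t b);
  S4 : forall s (u : tm s), nf s (sa sempty s u) = nf s u }.

Definition neg (u : tm tyo) : tm tyo := @tApp tyo tyo (tName NNeg) u.
Definition teq (s : ty) (u v : tm s) : tm tyo :=
  @tApp s tyo (@tApp s (TArr s tyo) (tName (NEq s)) u) v.

Definition branch (nf : forall s, tm s -> tm s) (E : tm tyo -> Prop) : Prop :=
  forall u, E u -> normal nf u.

Record evident (nf : forall s, tm s -> tm s) (E : tm tyo -> Prop) : Prop := {
  ev_DN : forall u, E (neg (neg u)) -> E u;
  ev_BQ : forall u v : tm tyo, E (teq u v) -> (E u /\ E v) \/ (E (neg u) /\ E (neg v));
  ev_BE : forall u v : tm tyo, E (neg (teq u v)) ->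
      (E u /\ E (neg v)) \/ (E (neg u) /\ E v);
  ev_FQ : forall s t (f g : tm (TArr s t)), E (teq f g) ->
      forall u : tm s, normal nf u -> E (teq (nf t (tApp f u)) (nf t (tApp g u)));
  ev_FE : forall s t (f g : tm (TArr s t)), E (neg (teq f g)) ->
      exists n : nat,
        E (neg (teq (nf t (@tApp s t f (tName (NVar s n))))
                    (nf t (@tApp s t g (tName (NVar s n))))));
  ev_Mat : forall s (k : nat) (sp1 sp2 : spine s tyo),
      E (sapply (tName (NVar s k)) sp1) ->
      E (neg (sapply (tName (NVar s k)) sp2)) ->
      SomeDiff (fun r a b => E (neg (teq a b))) sp1 sp2;
  ev_Dec : forall (al : B), al <> o -> forall s (k : nat) (sp1 sp2 : spine s (TBase al)),
      E (neg (teq (sapply (tName (NVar s k)) sp1) (sapply (tName (NVar s k)) sp2))) ->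
      SomeDiff (fun r a b => E (neg (teq a b))) sp1 sp2;
  ev_Con : forall (al : B), al <> o -> forall u v w z : tm (TBase al),
      E (teq u v) -> E (neg (teq w z)) ->
      (E (neg (teq u w)) /\ E (neg (teq v w))) \/
      (E (neg (teq u z)) /\ E (neg (teq v z))) }.

Definition complete (nf : forall s, tm s -> tm s) (E : tm tyo -> Prop) : Prop :=
  forall u : tm tyo, normal nf u -> E u \/ E (neg u).

Definition finite_branch (E : tm tyo -> Prop) : Prop :=
  exists l : list (tm tyo), forall u, E u <-> In u l.

End STT.

(* Main.v *)
Require Import Defs.
From Stdlib Require Import List.
From mathcomp Require Import all_boot.
From Stdlib Require Import ClassicalEpsilon ProofIrrelevance FunctionalExtensionality PropExtensionality Eqdep_dec Classical.
From Stdlib Require Import Program.Equality.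
From mathcomp Require Import classical_sets.
From Stdlib Require Import Lia.
From mathcomp Require Import zify.

Set Implicit Arguments. Unset Strict Implicit. Unset Printing Implicit Defensive.

Lemma maxext (T : Type) (N : T -> Prop) (D : T -> T -> Prop) (T0 : T -> Prop) :
  (forall t, T0 t -> N t) -> (forall s t, T0 s -> T0 t -> ~ D s t) ->
  exists P : T -> Prop, (forall t, T0 t -> P t) /\ (forall t, P t -> N t) /\
     (forall s t, P s -> P t -> ~ D s t) /\
     (forall t, N t -> ~ D t t -> (forall s, P s -> ~ D s t /\ ~ D t s) -> P t).
Proof.
move=> HN0 HD0.
pose Q := fun A : set T => (forall t, A t -> N t) /\
   (forall s t, (T0 s \/ A s) -> (T0 t \/ A t) -> ~ D s t).
have [A [[QA1 QA2] Amax]] : exists A, Q A /\ (forall B, (A `<` B)%classic -> ~ Q B).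
  apply: Zorn_bigcup => F FQ Ftot; split.
    by move=> t [X FX Xt]; case: (FQ X FX) => H _; exact: H.
  move=> s t [Ts|[X FX Xs]] [Tt|[Y FY Yt]].
  - exact: HD0.
  - by case: (FQ Y FY) => _ H; apply: H; [left|right].
  - by case: (FQ X FX) => _ H; apply: H; [right|left].
  - case: (Ftot X Y FX FY) => sub.
      by case: (FQ Y FY) => _ H; apply: H; right => //; apply: sub.
    by case: (FQ X FX) => _ H; apply: H; right => //; apply: sub.
exists (fun t => T0 t \/ A t); split; first by move=> t; left.
split; first by move=> t [/HN0|/QA1].
split; first by move=> s t Hs Ht; apply: QA2.
move=> t Nt Dtt Hc; apply: NNPP => nP.
apply: (Amax (fun x => A x \/ x = t)).
  split; first by move=> x Ax; left.
  move=> sub; apply: nP; right; exact: (sub t (or_intror erefl)).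
split.
  by move=> x [/QA1|->].
move=> s u Hs Hu.
have Ps : (T0 s \/ A s) \/ s = t by case: Hs => [?|[?|?]]; [left; left|left; right|right].
have Pu : (T0 u \/ A u) \/ u = t by case: Hu => [?|[?|?]]; [left; left|left; right|right].
case: Ps => [Ps|->]; case: Pu => [Pu|->].
- exact: QA2.
- by case: (Hc s Ps).
- by case: (Hc u Pu).
- exact: Dtt.
Qed.

Lemma sig_eq (A : Type) (P : A -> Prop) (a b : {x | P x}) : sval a = sval b -> a = b.
Proof. case: a => x p; case: b => y q /= e; subst y; f_equal; exact: proof_irrelevance. Qed.

Lemma fin_sig (A : Type) (P : A -> Prop) : finite_type A -> finite_type {x : A | P x}.
Proof.
case=> l Hl.
exists (flat_map (fun x => match excluded_middle_informative (P x) with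
                           | left p => [:: exist P x p] | right _ => [::] end) l).
case=> x p; apply/in_flat_map; exists x; split; first exact: Hl.
case: excluded_middle_informative => [p'|n] //.
by left; f_equal; apply: proof_irrelevance.
Qed.

Lemma fin_fun (A C' : Type) : finite_type A -> finite_type C' -> finite_type (A -> C').
Proof.
case=> lA HA [lC HC].
suff H : forall l : list A, exists F : list (A -> C'), forall f, exists g, In g F /\ forall x, In x l -> f x = g x.
  case: (H lA) => F HF; exists F => f; case: (HF f) => g [Hg Hfg].
  by have -> : f = g by apply: functional_extensionality => x; apply: Hfg.
elim=> [|x l [F HF]].
  case: (classic (inhabited (A -> C'))) => [[f0]|nI].
    by exists [:: f0] => f; exists f0; split => //; left.
  by exists [::] => f; case: nI; constructor.
exists (flat_map (fun g => List.map (fun c => fun y => if excluded_middle_informative (y = x) then c else g y) lC) F).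
move=> f; case: (HF f) => g [Hg Hfg].
exists (fun y => if excluded_middle_informative (y = x) then f x else g y); split.
  apply/in_flat_map; exists g; split => //; apply/in_map_iff; exists (f x); split => //; exact: HC.
move=> y /= Hy; case: excluded_middle_informative => [e|ne]; first by subst y.
by case: Hy => [e|Hy]; [case: ne|apply: Hfg].
Qed.

Lemma fin_inj (X Y : Type) (h : X -> Y) : (exists L : list Y, forall x, In (h x) L) ->
  (forall x x', h x = h x' -> x = x') -> finite_type X.
Proof.
case=> L HL hi.
exists (flat_map (fun y => match excluded_middle_informative (exists x, h x = y) with
  | left e => [:: proj1_sig (constructive_indefinite_description _ e)] | right _ => [::] end) L).
move=> x; apply/in_flat_map; exists (h x); split; first exact: HL.
case: excluded_middle_informative => [e|n]; last by case: n; exists x.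
left; apply: hi; exact: (proj2_sig (constructive_indefinite_description _ e)).
Qed.

Lemma fin_blist n : exists L : list (seq bool), forall bs, size bs = n -> In bs L.
Proof.
elim: n => [|n [L HL]].
  by exists [:: [::]] => -[|? ?] //= _; left.
exists (flat_map (fun bs => [:: true :: bs; false :: bs]) L).
case=> [|c bs] //= [e]; apply/in_flat_map; exists bs; split; first exact: HL.
by case: c; [left|right; left].
Qed.

Lemma map_eq_in (T U : Type) (f g : T -> U) (l : seq T) :
  map f l = map g l -> forall w, In w l -> f w = g w.
Proof.
elim: l => [|x l IH] //= [e1 e2] w [<-|Hw] //; exact: IH.
Qed.

Section ME.
Variable B : countType.
Variable o : B.
Variable nf : forall s : ty B, tm o s -> tm o s.
Variable sa : subst o -> forall s : ty B, tm o s -> tm o s.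
Hypothesis HN : normalization nf.
Hypothesis HS : subst_ext nf sa.
Variable E : tm o (tyo o) -> Prop.
Hypothesis HE : branch nf E.
Hypothesis Hev : evident nf E.

Notation TY := (ty B).
Notation TM := (tm o).

Definition dec (P : Prop) : bool := if excluded_middle_informative P then true else false.
Lemma decP (P : Prop) : dec P = true <-> P.
Proof. rewrite /dec; case: excluded_middle_informative => //. Qed.

Lemma nf_neg (u : TM (tyo o)) : nf (neg u) = neg (nf u).
Proof. exact: (N3 HN (x:=NNeg B) (b:=o) (scons u (snil o _))). Qed.

Lemma nf_teq (s : TY) (u v : TM s) : nf (teq u v) = teq (nf u) (nf v).
Proof. exact: (N3 HN (x:=NEq s) (b:=o) (scons u (scons v (snil o _)))). Qed.

Lemma nf_var (s : TY) (k : nat) (b : B) (sp : spine o s (TBase b)) :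
  nf (sapply (tName o (NVar s k)) sp) = sapply (tName o (NVar s k)) (smap nf sp).
Proof. exact: (N3 HN (x:=NVar s k) sp). Qed.

Lemma nf_varb (b : B) (k : nat) : nf (tName o (NVar (TBase b) k)) = tName o (NVar (TBase b) k).
Proof. exact: (nf_var k (snil o _)). Qed.

Lemma E_nf u : E u -> nf u = u.
Proof. by move/HE. Qed.

Definition DisE (s : TY) (u v : TM s) : Prop := E (neg (teq u v)).

Lemma DisE_nf s (u v : TM s) : DisE u v -> DisE (nf u) (nf v).
Proof. rewrite /DisE => H; have := E_nf H; rewrite nf_neg nf_teq => e; rewrite /DisE e; exact H. Qed.

Lemma nfK s (u : TM s) : nf (nf u) = nf u.
Proof. by case: HN => H1 *; apply: H1. Qed.

Lemma nf_app s t (f : TM (TArr s t)) a : nf (tApp (nf f) a) = nf (tApp f a).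
Proof. by case: HN => H1 H2 *; apply: H2. Qed.

Lemma sd_nil P s : ~ @SomeDiff B o P s s (snil o s) (snil o s).
Proof. move=> H; dependent destruction H. Qed.

Lemma sd_cons P s t r (a b : TM s) (r1 r2 : spine o t r) :
  SomeDiff P (scons a r1) (scons b r2) -> P s a b \/ SomeDiff P r1 r2.
Proof. move=> H; dependent destruction H; tauto. Qed.

Lemma teq_inj s (u v u' v' : TM s) : neg (teq u v) = neg (teq u' v') -> u = u' /\ v = v'.
Proof.
rewrite /neg /teq => H; injection H => H1 H2.
apply inj_pair2_eq_dec in H1; last exact: (@ty_eq_dec B).
apply inj_pair2_eq_dec in H2; last exact: (@ty_eq_dec B).
by [].
Qed.



Definition InE (b : B) (u : TM (TBase b)) : Prop :=
  exists e : TBase b = tyo o, E (eq_rect _ TM u _ e).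
Definition InNE (b : B) (u : TM (TBase b)) : Prop :=
  exists e : TBase b = tyo o, E (neg (eq_rect _ TM u _ e)).

Lemma InE_o (u : TM (TBase o)) : InE u <-> E u.
Proof.
split; last by move=> H; exists erefl.
by case=> e; rewrite (UIP_dec (@ty_eq_dec B) e erefl).
Qed.
Lemma InNE_o (u : TM (TBase o)) : InNE u <-> E (neg u).
Proof.
split; last by move=> H; exists erefl.
by case=> e; rewrite (UIP_dec (@ty_eq_dec B) e erefl).
Qed.

Definition relb (b : B) (x : bool) : TM (TBase b) -> Prop :=
  fun u => if x then ~ InNE u else ~ InE u.

Definition disc (b : B) (P : TM (TBase b) -> Prop) : Prop :=
  [/\ (forall t, P t -> nf t = t),
      (forall s t, P s -> P t -> ~ DisE s t) &
      (forall t, nf t = t -> ~ DisE t t ->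
          (forall s, P s -> ~ DisE s t /\ ~ DisE t s) -> P t)].

Definition goodB (b : B) (p : bool * (TM (TBase b) -> Prop)) : Prop :=
  if b == o then p.2 = @relb b p.1 else p.1 = false /\ disc p.2.

Definition BaseV (b : B) := {p : bool * (TM (TBase b) -> Prop) | goodB p}.

Fixpoint V (s : TY) : {T : Type & TM s -> T -> Prop} :=
  match s with
  | TBase b => existT (fun T => TM (TBase b) -> T -> Prop) (BaseV b)
                  (fun u p => (sval p).2 (nf u))
  | TArr s1 s2 => existT (fun T => TM (TArr s1 s2) -> T -> Prop)
      {f : projT1 (V s1) -> projT1 (V s2) |
         exists u, forall v a, projT2 (V s1) v a -> projT2 (V s2) (tApp u v) (f a)}
      (fun u f => forall v a, projT2 (V s1) v a -> projT2 (V s2) (tApp u v) (sval f a))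
  end.

Definition Car (s : TY) : Type := projT1 (V s).
Definition Rl (s : TY) : TM s -> Car s -> Prop := projT2 (V s).

Lemma Rl_arr s t (u : TM (TArr s t)) (f : Car (TArr s t)) :
  Rl u f <-> forall v a, Rl v a -> Rl (tApp u v) (sval f a).
Proof. by []. Qed.

Lemma Rl_base b (u : TM (TBase b)) (p : Car (TBase b)) : Rl u p <-> (sval p).2 (nf u).
Proof. by []. Qed.

Lemma Rl_nf s (u : TM s) a : Rl u a <-> Rl (nf u) a.
Proof.
elim: s u a => [b|s1 _ s2 IH] u a.
  by rewrite !Rl_base nfK.
rewrite !Rl_arr; split=> H v c Hv.
  by apply/IH; rewrite nf_app -IH; apply: H.
by apply/IH; rewrite -nf_app -IH; apply: H.
Qed.

Fixpoint C (s : TY) : TM s -> TM s -> Prop :=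
  match s return TM s -> TM s -> Prop with
  | TBase b => fun u v =>
      if b == o then ~ (InE (nf u) /\ InNE (nf v)) /\ ~ (InNE (nf u) /\ InE (nf v))
      else ~ DisE (nf u) (nf v) /\ ~ DisE (nf v) (nf u)
  | TArr s1 s2 => fun u v => forall (a : Car s1) x y, Rl x a -> Rl y a -> C (tApp u x) (tApp v y)
  end.

Fixpoint tsize (s : TY) : nat :=
  match s with TBase _ => 1 | TArr a b => (tsize a + tsize b).+1 end.


Inductive AllV : forall s r, spine o s r -> spine o s r -> Prop :=
| av_nil s : AllV (snil o s) (snil o s)
| av_cons s t r (a b : TM s) (r1 r2 : spine o t r) (c : Car s) :
    Rl a c -> Rl b c -> AllV r1 r2 -> AllV (scons a r1) (scons b r2).

Lemma C_spines s (u v : TM s) :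
  (forall b (sp1 sp2 : spine o s (TBase b)), AllV sp1 sp2 -> C (sapply u sp1) (sapply v sp2)) ->
  C u v.
Proof.
elim: s u v => [b|s1 _ s2 IH] u v H.
  exact: (H b (snil o _) (snil o _) (av_nil _)).
move=> a x y Hx Hy; apply: IH => b sp1 sp2 Hsp.
exact: (H b (scons x sp1) (scons y sp2) (av_cons Hx Hy Hsp)).
Qed.

Lemma sd_allv (P : forall s, TM s -> TM s -> Prop) s r (sp1 sp2 : spine o s r) :
  AllV sp1 sp2 -> SomeDiff P (smap nf sp1) (smap nf sp2) ->
  exists s' (a b : TM s') (c : Car s'), P s' (nf a) (nf b) /\ Rl a c /\ Rl b c /\ tsize s' < tsize s.
Proof.
elim=> [s0|s0 t0 r0 a b r1 r2 c Ha Hb Hr IH] /=.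
  by move/sd_nil.
case/sd_cons => [HP|Hd].
  by exists s0, a, b, c; split => //; split => //; split => //; rewrite /=; lia.
case: (IH Hd) => s' [a' [b' [c' [H1 [H2 [H3 H4]]]]]].
by exists s', a', b', c'; split => //; split => //; split => //; rewrite /=; lia.
Qed.

Definition L24 s := forall (u v : TM s) c, Rl u c -> Rl v c -> ~ DisE (nf u) (nf v).

Lemma var_C s k : (forall s', tsize s' < tsize s -> L24 s') ->
  C (tName o (NVar s k)) (tName o (NVar s k)).
Proof.
move=> IH; apply: C_spines => b sp1 sp2 Hsp /=; rewrite !nf_var.
have key : SomeDiff (fun r a b => E (neg (teq a b))) (smap nf sp1) (smap nf sp2) -> False.
  case/(sd_allv Hsp) => s' [a [b' [c [H1 [H2 [H3 H4]]]]]].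
  exact: (IH s' H4 a b' c H2 H3 H1).
have key' : SomeDiff (fun r a b => E (neg (teq a b))) (smap nf sp2) (smap nf sp1) -> False.
  have Hsp' : AllV sp2 sp1.
    by elim: Hsp => [s0|s0 t0 r0 a b0 r1 r2 c Ha Hb _ IH']; [exact: av_nil|exact: (av_cons Hb Ha IH')].
  case/(sd_allv Hsp') => s' [a [b' [c [H1 [H2 [H3 H4]]]]]].
  exact: (IH s' H4 a b' c H2 H3 H1).
case: (b =P o) => [eb|ne].
  subst b; split; case; rewrite InE_o InNE_o => H1 H2.
    exact: key (ev_Mat Hev H1 H2).
  exact: key' (ev_Mat Hev H2 H1).
split => H1.
  exact: key (ev_Dec Hev ne H1).
exact: key' (ev_Dec Hev ne H1).
Qed.


Definition L1 s := forall T : TM s -> Prop, (exists t, T t) ->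
  (forall u v, T u -> T v -> C u v) -> exists a, forall u, T u -> Rl u a.
Definition L2 s := forall (u v : TM s) a, Rl u a -> Rl v a -> C u v.
Definition L4 s := forall (u v : TM s), C u v -> ~ DisE (nf u) (nf v).
Definition Lt s := forall a : Car s, exists u, Rl u a.
Definition L6 s := forall (u v : TM s) a b, E (teq (nf u) (nf v)) -> Rl u a -> Rl v b -> a = b.
Definition Good s := [/\ L1 s, L2 s, L4 s, Lt s & L6 s].

Lemma good24 s : Good s -> L24 s.
Proof. case=> _ H2 H4 _ _ u v c Hu Hv; exact: H4 (H2 _ _ _ Hu Hv). Qed.

Lemma goodO (x : bool) : goodB (x, @relb o x).
Proof. by rewrite /goodB eqxx. Qed.
Definition mkO (x : bool) : Car (TBase o) := exist _ (x, @relb o x) (goodO x).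

Lemma carO (a : Car (TBase o)) : a = mkO (sval a).1.
Proof.
apply: sig_eq; case: a => [[x P]] /=; rewrite /goodB eqxx /= => -> //.
Qed.

Lemma Rl_mkO (u : TM (TBase o)) x : Rl u (mkO x) <-> relb x (nf u).
Proof. by []. Qed.

Lemma pvar_nf : nf (tName o (NVar (TBase o) 0)) = tName o (NVar (TBase o) 0).
Proof. exact: nf_varb. Qed.

Lemma pvar_ok : ~ (E (tName o (NVar (TBase o) 0)) /\ E (neg (tName o (NVar (TBase o) 0)))).
Proof.
case=> H1 H2; have := ev_Mat Hev (sp1 := snil o _) (sp2 := snil o _) H1 H2.
exact: sd_nil.
Qed.

Lemma good_o : Good (TBase o).
Proof.
split.
- move=> T [t0 Tt0] HC.
  case: (classic (exists t, T t /\ InE (nf t))) => [[t [Tt Et]]|nE].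
    exists (mkO true) => u Tu; rewrite Rl_mkO /relb => HN'.
    by have := HC t u Tt Tu; rewrite /= eqxx; case=> H _; apply: H.
  exists (mkO false) => u Tu; rewrite Rl_mkO /relb => HE'.
  by apply: nE; exists u.
- move=> u v a; rewrite (carO a) !Rl_mkO /relb /= eqxx.
  by case: (sval a).1 => H1 H2; split; case.
- move=> u v; rewrite /= eqxx => -[H1 H2] HD.
  case: (ev_BE Hev HD) => -[Hu Hv].
    by apply: H1; rewrite InE_o InNE_o.
  by apply: H2; rewrite InE_o InNE_o.
- move=> a; rewrite (carO a); case: (sval a).1.
    case: (classic (E (neg (tName o (NVar (TBase o) 0))))) => H.
      exists (neg (tName o (NVar (TBase o) 0))); rewrite Rl_mkO /relb nf_neg pvar_nf InNE_o.
      by move/(ev_DN Hev) => Hp; apply: pvar_ok.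
    by exists (tName o (NVar (TBase o) 0)); rewrite Rl_mkO /relb pvar_nf InNE_o.
  case: (classic (E (tName o (NVar (TBase o) 0)))) => H.
    exists (neg (tName o (NVar (TBase o) 0))); rewrite Rl_mkO /relb nf_neg pvar_nf InE_o.
    by move=> Hn; apply: pvar_ok.
  by exists (tName o (NVar (TBase o) 0)); rewrite Rl_mkO /relb pvar_nf InE_o.
- move=> u v a b HQ; rewrite (carO a) (carO b) !Rl_mkO /relb.
  case: (ev_BQ Hev HQ) => -[Hu Hv].
    by case: (sval a).1; case: (sval b).1 => //; rewrite ?InE_o ?InNE_o.
  by case: (sval a).1; case: (sval b).1 => //; rewrite ?InE_o ?InNE_o.
Qed.


Section Sort.
Variable b : B.
Hypothesis bne : b <> o.

Lemma bneq : (b == o) = false.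
Proof. by apply/negbTE/eqP. Qed.

Lemma goodD (P : TM (TBase b) -> Prop) : disc P -> goodB (false, P).
Proof. by rewrite /goodB bneq. Qed.
Definition mkD P (H : disc P) : Car (TBase b) := exist _ (false, P) (goodD H).

Lemma carD (a : Car (TBase b)) : exists P (H : disc P), a = mkD H.
Proof.
case: a => [[x P]] H.
have [ex dP] : x = false /\ disc P by move: H; rewrite /goodB bneq.
subst x.
by exists P, dP; apply: sig_eq.
Qed.

Lemma Rl_mkD (u : TM (TBase b)) P (H : disc P) : Rl u (mkD H) <-> P (nf u).
Proof. by []. Qed.

Lemma C_b (u v : TM (TBase b)) : C u v <-> ~ DisE (nf u) (nf v) /\ ~ DisE (nf v) (nf u).
Proof. by rewrite /= bneq. Qed.

Lemma bvar_ok : ~ DisE (tName o (NVar (TBase b) 0)) (tName o (NVar (TBase b) 0)).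
Proof.
move=> H; have := ev_Dec Hev bne (sp1 := snil o _) (sp2 := snil o _) H.
exact: sd_nil.
Qed.

Lemma good_b : Good (TBase b).
Proof.
split.
- move=> T [t0 Tt0] HC.
  have [P [HP1 [HP2 [HP3 HP4]]]] := @maxext (TM (TBase b)) (fun t => nf t = t) (@DisE _)
    (fun s => exists t, T t /\ s = nf t)
    ltac:(by move=> ? [t [_ ->]]; rewrite nfK)
    ltac:(by move=> ? ? [t [Tt ->]] [t' [Tt' ->]]; case/C_b: (HC t t' Tt Tt')).
  have dP : disc P by split.
  exists (mkD dP) => u Tu; rewrite Rl_mkD; apply: HP1; by exists u.
- move=> u v a; case: (carD a) => P [dP ->]; rewrite !Rl_mkD => Hu Hv.
  by case: dP => _ H2 _; rewrite C_b; split; apply: H2.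
- by move=> u v /C_b [].
- move=> a; case: (carD a) => P [dP ->].
  case: (classic (exists t, P t)) => [[t Pt]|nP].
    exists t; rewrite Rl_mkD; case: dP => H1 _ _; by rewrite (H1 _ Pt).
  exists (tName o (NVar (TBase b) 0)); rewrite Rl_mkD nf_varb.
  case: dP => _ _ H3; apply: H3; first exact: nf_varb.
    exact: bvar_ok.
  by move=> s Ps; case: nP; exists s.
- move=> u v a a'; case: (carD a) => P [dP ->]; case: (carD a') => Q [dQ ->].
  rewrite !Rl_mkD => HQ Pu Qv.
  have sub : forall (P Q : TM (TBase b) -> Prop) (u v : TM (TBase b)), disc P -> disc Q ->
      (E (teq u v) \/ E (teq v u)) -> P u -> Q v -> forall w, P w -> Q w.
    move=> P' Q' u' v' [P1 P2 P3] [Q1 Q2 Q3] Huv Pu' Qv' w Pw.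
    apply: Q3; first exact: P1.
      exact: P2.
    move=> z Qz; split => Hd.
    + case: Huv => Huv.
        case: (ev_Con Hev bne Huv Hd) => -[H1 H2].
          exact: (Q2 _ _ Qv' Qz H2).
        exact: (P2 _ _ Pu' Pw H1).
      case: (ev_Con Hev bne Huv Hd) => -[H1 H2].
        exact: (Q2 _ _ Qv' Qz H1).
      exact: (P2 _ _ Pu' Pw H2).
    + case: Huv => Huv.
        case: (ev_Con Hev bne Huv Hd) => -[H1 H2].
          exact: (P2 _ _ Pu' Pw H1).
        exact: (Q2 _ _ Qv' Qz H2).
      case: (ev_Con Hev bne Huv Hd) => -[H1 H2].
        exact: (P2 _ _ Pu' Pw H2).
      exact: (Q2 _ _ Qv' Qz H1).
  have ePQ : P = Q.
    apply: functional_extensionality => w; apply: propositional_extensionality; split.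
      exact: (sub P Q (nf u) (nf v) dP dQ (or_introl HQ) Pu Qv).
    exact: (sub Q P (nf v) (nf u) dQ dP (or_intror HQ) Qv Pu).
  by subst Q; apply: sig_eq.
Qed.

End Sort.


Lemma good_arr s1 s2 : Good s1 -> Good s2 ->
  (forall k, C (tName o (NVar s1 k)) (tName o (NVar s1 k))) -> Good (TArr s1 s2).
Proof.
move=> G1 G2 Hvar; have G1' := G1; have G2' := G2.
case: G1' => G1a G1b G1c G1d G1e; case: G2' => G2a G2b G2c G2d G2e.
split.
- move=> T [t0 Tt0] HC.
  have Ha : forall a : Car s1, exists c, forall w,
      (exists t x, T t /\ Rl x a /\ w = tApp t x) -> Rl w c.
    move=> a; apply: G2a.
      by case: (G1d a) => x Hx; exists (tApp t0 x), t0, x.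
    move=> w1 w2 [t [x [Tt [Hx ->]]]] [t' [y [Tt' [Hy ->]]]].
    exact: (HC t t' Tt Tt' a x y Hx Hy).
  pose f a := proj1_sig (constructive_indefinite_description _ (Ha a)).
  have fP : forall a w, (exists t x, T t /\ Rl x a /\ w = tApp t x) -> Rl w (f a).
    by move=> a; exact: (proj2_sig (constructive_indefinite_description _ (Ha a))).
  have ex : exists u, forall v a, Rl v a -> Rl (tApp u v) (f a).
    by exists t0 => v a Hv; apply: fP; exists t0, v.
  exists (exist _ f ex) => u Tu v a Hv; apply: fP; by exists u, v.
- move=> u v f Hu Hv a x y Hx Hy.
  exact: (G2b _ _ _ (Hu x a Hx) (Hv y a Hy)).
- move=> u v HC HD.
  case: (ev_FE Hev HD) => n; rewrite !nf_app => HD'.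
  have [a Ha] : exists a, Rl (tName o (NVar s1 n)) a.
    case: (G1a (fun t => t = tName o (NVar s1 n))) => [|t t' -> ->|a Ha].
    + by exists (tName o (NVar s1 n)).
    + exact: Hvar.
    + by exists a; apply: Ha.
  exact: (G2c _ _ (HC a _ _ Ha Ha) HD').
- by case=> f [u Hu]; exists u.
- move=> u v f g HQ Hu Hv; apply: sig_eq; apply: functional_extensionality => a.
  case: (G1d a) => x Hx; have Hx' : Rl (nf x) a by rewrite -Rl_nf.
  have HQ' := ev_FQ Hev HQ (nfK x).
  apply: (G2e _ _ _ _ HQ').
    by rewrite Rl_nf nf_app -Rl_nf; apply: Hu.
  by rewrite Rl_nf nf_app -Rl_nf; apply: Hv.
Qed.

Lemma good_all s : Good s.
Proof.
suff H : forall n s, tsize s <= n -> Good s by exact: (H _ s (leqnn _)).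
elim=> [|n IH] [b|s1 s2] /= Hs.
- by [].
- by [].
- case: (b =P o) => [->|ne]; [exact: good_o|exact: good_b].
- apply: good_arr.
  + by apply: IH; lia.
  + by apply: IH; lia.
  + move=> k; apply: var_C => s' Hs'; apply: good24; apply: IH; lia.
Qed.


Lemma var_val s k : exists a, Rl (tName o (NVar s k)) a.
Proof.
case: (good_all s) => H1 _ _ _ _.
case: (H1 (fun t => t = tName o (NVar s k))) => [|t t' -> ->|a Ha].
- by exists (tName o (NVar s k)).
- apply: var_C => s' _; exact: good24 (good_all s').
- by exists a; apply: Ha.
Qed.

Definition appD (s t : TY) (f : Car (TArr s t)) (a : Car s) : Car t := sval f a.

Lemma appD_ext s t (f g : Car (TArr s t)) : (forall a, appD f a = appD g a) -> f = g.
Proof. by move=> H; apply: sig_eq; apply: functional_extensionality. Qed.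

Lemma car_ne s : inhabited (Car s).
Proof. by case: (var_val s 0) => a _; constructor. Qed.

Definition D : frame B := @Frame B Car appD appD_ext car_ne.

Lemma Rl_o (u : TM (TBase o)) (a : Car (TBase o)) : Rl u a <-> relb (sval a).1 (nf u).
Proof. by rewrite {1}(carO a). Qed.

Lemma neg_ok : forall v (a : Car (tyo o)),
  Rl v a -> Rl (tApp (tName o (NNeg B)) v) (mkO (~~ (sval a).1)).
Proof.
move=> v a; rewrite Rl_o Rl_mkO.
change (tApp (tName o (NNeg B)) v) with (neg v); rewrite nf_neg /relb.
case: (sval a).1 => /=; rewrite ?InE_o ?InNE_o //.
by move=> H1 H2; apply: H1; apply: (ev_DN Hev).
Qed.

Lemma negV_ex : exists u : TM (TArr (tyo o) (tyo o)), forall v (a : Car (tyo o)),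
  Rl v a -> Rl (tApp u v) (mkO (~~ (sval a).1)).
Proof. exists (tName o (NNeg B)); exact: neg_ok. Qed.

Definition negV : Car (TArr (tyo o) (tyo o)) :=
  exist _ (fun a : Car (tyo o) => mkO (~~ (sval a).1)) negV_ex.

Lemma dec_t (P : Prop) : P -> dec P = true.
Proof. by move=> H; apply/decP. Qed.
Lemma dec_f (P : Prop) : ~ P -> dec P = false.
Proof. by move=> H; case e: (dec P) => //; move/decP: e. Qed.

Lemma eq_inner s (x : TM s) (a : Car s) : Rl x a ->
  forall v b, Rl v b -> Rl (tApp (tApp (tName o (NEq s)) x) v) (mkO (dec (a = b))).
Proof.
move=> Hx v b Hv; rewrite Rl_mkO.
change (tApp (tApp (tName o (NEq s)) x) v) with (teq x v); rewrite nf_teq /relb.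
case: (classic (a = b)) => [e|ne].
  rewrite dec_t // InNE_o; subst b; exact: (good24 (good_all s) Hx Hv).
rewrite dec_f // InE_o => HQ; apply: ne.
by case: (good_all s) => _ _ _ _ H6; apply: (H6 _ _ _ _ HQ Hx Hv).
Qed.

Lemma inner_ex s (a : Car s) : exists u : TM (TArr s (tyo o)), forall v b,
  Rl v b -> Rl (tApp u v) (mkO (dec (a = b))).
Proof.
case: (good_all s) => _ _ _ Ht _; case: (Ht a) => x Hx.
exists (tApp (tName o (NEq s)) x); exact: eq_inner.
Qed.

Definition innerV s (a : Car s) : Car (TArr s (tyo o)) :=
  exist _ (fun b : Car s => mkO (dec (a = b))) (inner_ex a).

Lemma eqV_ex s : exists u : TM (TArr s (TArr s (tyo o))), forall x (a : Car s),
  Rl x a -> Rl (tApp u x) (innerV a).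
Proof. exists (tName o (NEq s)) => x a Hx; exact: eq_inner. Qed.

Definition eqV s : Car (TArr s (TArr s (tyo o))) := exist _ (@innerV s) (eqV_ex s).

Definition varV s k : Car s := proj1_sig (constructive_indefinite_description _ (var_val s k)).

Definition I0 : asg o D := fun x =>
  match x as x0 return car D (nty o x0) with
  | NNeg => negV
  | NEq s => eqV s
  | NVar s k => varV s k
  end.

Lemma I0_ok x : Rl (tName o x) (I0 x).
Proof.
case: x => [|s|s k] /=.
- exact: neg_ok.
- by move=> v a Hv; apply: eq_inner.
- exact: (proj2_sig (constructive_indefinite_description _ (var_val s k))).
Qed.


Lemma ev_det (J : asg o D) s (u : TM s) a a' : ev J u a -> ev J u a' -> a = a'.
Proof.
elim: u J a a' => [x|s1 t f IHf b IHb|x t b IHb] J a a' /=.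
- by move=> -> ->.
- move=> [g [c [Hg [Hc <-]]]] [g' [c' [Hg' [Hc' <-]]]].
  by rewrite (IHf _ _ _ Hg Hg') (IHb _ _ _ Hc Hc').
- move=> H H'; apply: appD_ext => c; exact: (IHb _ _ _ (H c) (H' c)).
Qed.

Lemma subst_lemma s (u : TM s) : forall (th : subst o) (J : asg o D),
  (forall x, Rl (sa th (tName o x)) (J x)) -> exists a, ev J u a /\ Rl (sa th u) a.
Proof.
elim: u => [x|s1 t f IHf b IHb|x t b IHb] th J H.
- by exists (J x); split => //; apply: H.
- case: (IHf th J H) => g [Hg Rg]; case: (IHb th J H) => c [Hc Rc].
  exists (sval g c); split; first by exists g, c.
  by rewrite (S2 HS); apply: Rg.
- have key : forall (w : TM (nty o x)) (c : Car (nty o x)), Rl w c ->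
      exists a, ev (upd J c) b a /\ Rl (sa (supd th w) b) a.
    move=> w c Hw; apply: IHb => y; rewrite (S1 HS) /supd /upd.
    case: (name_eq_dec x y) => [e|ne].
      by subst y.
    by have := H y; rewrite (S1 HS).
  have exc : forall c : Car (nty o x), exists a, ev (upd J c) b a.
    move=> c; case: (good_all (nty o x)) => _ _ _ Ht _; case: (Ht c) => w Hw.
    by case: (key w c Hw) => a [Ha _]; exists a.
  pose g0 c := proj1_sig (constructive_indefinite_description _ (exc c)).
  have g0P : forall c, ev (upd J c) b (g0 c).
    move=> c; exact: (proj2_sig (constructive_indefinite_description _ (exc c))).
  have Rlam : forall v c, Rl v c -> Rl (tApp (sa th (tLam x b)) v) (g0 c).
    move=> v c Hv; rewrite Rl_nf (S3 HS) -Rl_nf.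
    case: (key v c Hv) => a [Ha Ra].
    by rewrite -(ev_det Ha (g0P c)).
  exists (exist _ g0 (ex_intro _ (sa th (tLam x b)) Rlam)); split.
    by move=> c; exact: g0P.
  exact: Rlam.
Qed.

Lemma ev_key s (u : TM s) : exists a, ev I0 u a /\ Rl u a.
Proof.
case: (subst_lemma u (th := sempty o) (J := I0)) => [x|a [Ha Ra]].
  by rewrite (S1 HS); exact: I0_ok.
exists a; split => //.
by rewrite Rl_nf -(S4 HS) -Rl_nf.
Qed.

Lemma interp_I0 : interp I0.
Proof. by move=> s u; case: (ev_key u) => a [Ha _]; exists a. Qed.

Definition tv0 (a : car D (tyo o)) : bool := (sval a).1.

Lemma model0 : is_model E I0 tv0.
Proof.
split.
  split.
  - exact: interp_I0.
  - exists (@mkO) => a; first by rewrite /tv0 -carO.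
    by [].
  - by [].
  - move=> s a b; exact: decP.
move=> u Eu a Ha; case: (ev_key u) => a' [Ha' Ra].
rewrite (ev_det Ha Ha'); move: Ra; rewrite Rl_o (E_nf Eu) /tv0 /relb.
by case: (sval a').1 => //; rewrite InE_o.
Qed.


Lemma surj0 : complete nf E -> surjective_interp I0.
Proof.
move=> Hc s a; case: (good_all s) => _ _ _ Ht H6; case: (Ht a) => u Hu.
case: (ev_key u) => a' [Ha' Ra']; exists u.
have -> : a = a' => //.
have nn : normal nf (teq (nf u) (nf u)) by rewrite /normal nf_teq nfK.
case: (Hc _ nn) => HQ.
  exact: (H6 _ _ _ _ HQ Hu Ra').
by case: (good24 (good_all s) Hu Hu).
Qed.

Lemma disc_terms (b : B) : finite_branch E ->
  exists l : list (TM (TBase b)), forall u v, DisE u v -> In u l /\ In v l.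
Proof.
case=> LE HLE.
pose pick (w : TM (tyo o)) : list (TM (TBase b)) :=
  match excluded_middle_informative
    (exists p : TM (TBase b) * TM (TBase b), w = neg (teq p.1 p.2)) with
  | left e => [:: (proj1_sig (constructive_indefinite_description _ e)).1;
                  (proj1_sig (constructive_indefinite_description _ e)).2]
  | right _ => [::] end.
exists (flat_map pick LE) => u v HD.
have Hin : In (neg (teq u v)) LE by apply/HLE.
have P : forall z, (z = u \/ z = v) -> In z (flat_map pick LE).
  move=> z Hz; apply/in_flat_map; exists (neg (teq u v)); split => //.
  rewrite /pick; case: excluded_middle_informative => [e|n]; last by case: n; exists (u, v).
  have := proj2_sig (constructive_indefinite_description _ e).
  case: (proj1_sig _) => p1 p2 /= /teq_inj [<- <-].
  by case: Hz => ->; [left|right; left].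
by split; apply: P; [left|right].
Qed.

Lemma fin_car : finite_branch E -> forall s, finite_type (Car s).
Proof.
move=> Hf; elim=> [b|s1 IH1 s2 IH2].
  case: (b =P o) => [e|ne].
    subst b; exists [:: mkO true; mkO false] => a; rewrite (carO a).
    by case: (sval a).1; [left|right; left].
  case: (disc_terms b Hf) => l Hl.
  apply: (@fin_inj _ _ (fun a : Car (TBase b) => map (fun t => dec ((sval a).2 t)) l)).
    case: (fin_blist (size l)) => L HL; exists L => a; apply: HL; exact: size_map.
  move=> a a' e.
  case: (carD ne a) => P [dP ea]; case: (carD ne a') => Q [dQ ea']; subst a a'.
  have ag := map_eq_in e.
  have out : forall R, disc R -> forall w, ~ In w l -> (R w <-> nf w = w).
    move=> R [R1 R2 R3] w nw; split; first exact: R1.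
    move=> nfw; apply: R3 => //.
      by move=> Hd; apply: nw; case: (Hl _ _ Hd).
    by move=> z Rz; split => Hd; apply: nw; case: (Hl _ _ Hd).
  have ePQ : P = Q.
    apply: functional_extensionality => w; apply: propositional_extensionality.
    case: (classic (In w l)) => [Hw|nw].
      have e0 : dec (P w) = dec (Q w) by exact: (ag w Hw).
      by split => H0; apply/decP; [rewrite -e0|rewrite e0]; apply/decP.
    by rewrite (out _ dP _ nw) (out _ dQ _ nw).
  by subst Q; apply: sig_eq.
exact: fin_sig (fin_fun IH1 IH2).
Qed.

End ME.

Theorem theorem7p7 (B : countType) (o : B)
  (nf : forall s : ty B, tm o s -> tm o s)
  (sa : subst o -> forall s : ty B, tm o s -> tm o s) :
  normalization nf -> subst_ext nf sa ->
  forall E : tm o (tyo o) -> Prop, branch nf E -> evident nf E ->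
  [/\ (exists (D : frame B) (I : asg o D) (tv : car D (tyo o) -> bool),
         is_model E I tv),
      (complete nf E ->
       exists (D : frame B) (I : asg o D) (tv : car D (tyo o) -> bool),
         is_model E I tv /\ surjective_interp I) &
      (finite_branch E ->
       exists (D : frame B) (I : asg o D) (tv : car D (tyo o) -> bool),
         is_model E I tv /\ forall s : ty B, finite_type (car D s))].
Proof.
move=> HN HS E HE Hev.
have M := @model0 B o nf sa HN HS E HE Hev.
split.
- by exists (D HN Hev), (I0 HN Hev), (tv0 (HN:=HN) (Hev:=Hev)).
- move=> Hc; exists (D HN Hev), (I0 HN Hev), (tv0 (HN:=HN) (Hev:=Hev)); split => //.
  exact: (@surj0 B o nf sa HN HS E Hev Hc).
- move=> Hf; exists (D HN Hev), (I0 HN Hev), (tv0 (HN:=HN) (Hev:=Hev)); split => //.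
  exact: (@fin_car B o nf E Hf).
Qed.
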